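(* Let $P$ be a Markov kernel on a measurable space $(\mathsf{X},\mathcal{X})$. Suppose there exist $C\in\mathcal{X}$, $\epsilon>0$ and a probability measure $\nu$ with $P(x,\cdot)\ge\epsilon\nu(\cdot)$ for all $x\in C$, and let $Q$ be the residual kernel ($Q(x,A)=(1-\epsilon)^{-1}(P(x,A)-\epsilon\nu(A))$ if $0<\epsilon<1$, $Q=\nu$ if $\epsilon=1$). Suppose further that there exist a function $W_0:\mathsf{X}\to[1,\infty)$, a function $\phi_0\in\mathcal{C}$ and a constant $b_0$ such that $PW_0\leq W_0-\phi_0\circ W_0+b_0\mathbb{1}_C$. Let $d_0=\inf_{x\notin C}W_0(x)$. Define the kernel $\check P$ on $\mathsf{X}\times\mathsf{X}$ by $$\check P(x,x';A\times A')=P(x,A)P(x',A')\mathbb{1}_{(C\times C)^c}(x,x')+Q(x,A)Q(x',A')\mathbb{1}_{C\times C}(x,x').$$ If $\phi_0(d_0)>b_0$, then, with $W(x,x')=W_0(x)+W_0(x')-1$ and $\phi=\lambda\phi_0$ for any $\lambda$ with $0<\lambda<1-b_0/\phi_0(d_0)$, one has $\check PW(x,x')\leq W(x,x')-\phi(W(x,x'))$ for all $(x,x')\notin C\times C$, and $$\sup_{C\times C}\check PW\leq 2(1-\epsilon)^{-1}\Big\{\sup_C PW_0-\epsilon\nu(W_0)\Big\}-1.$$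
   Context: $\mathcal{C}$ is the set of functions $\phi:[1,\infty)\to\mathbb{R}^+$ that are concave and differentiable with $\phi(1)>0$, $\lim_{v\to\infty}\phi(v)=\infty$ and $\lim_{v\to\infty}\phi'(v)=0$. $\nu(W_0)=\int W_0\,d\nu$. *)

(* Defs.v *)
From HB Require Import structures.
From mathcomp Require Import all_boot all_order all_algebra.
From mathcomp Require Import all_classical all_reals all_analysis.
Set Implicit Arguments. Unset Strict Implicit. Unset Printing Implicit Defensive.
Import Order.TTheory GRing.Theory Num.Theory.
Import numFieldNormedType.Exports.
Local Open Scope classical_set_scope.
Local Open Scope ring_scope.

Definition class_C (R : realType) (phi : R -> R) : Prop :=
  (forall v, 1 <= v -> 0 <= phi v) /\
      (forall x y t, 1 <= x -> 1 <= y -> 0 <= t <= 1 ->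
          t * phi x + (1 - t) * phi y <= phi (t * x + (1 - t) * y)) /\
  (forall v, 1 < v -> derivable phi v 1) /\
  0 < phi 1 /\
  phi x @[x --> +oo] --> +oo /\
  derive1 phi x @[x --> +oo] --> (0 : R).

(* The split chain kernel \check P on X * X: for (x,x') outside C x C it is
   the product measure P(x,.) (x) P(x',.), on C x C it is Q(x,.) (x) Q(x',.).
   (A product measure is determined by its values on rectangles.) *)
Definition check_kernel d (X : measurableType d) (R : realType)
  (C : set X) (P Q : X -> set X -> \bar R) (xx : X * X) : set (X * X) -> \bar R :=
  if `[< C xx.1 /\ C xx.2 >] then (Q xx.1 \x Q xx.2)%E
  else (P xx.1 \x P xx.2)%E.

Definition check_kernel_fun d (X : measurableType d) (R : realType)
  (C : set X) (P Q : X -> set X -> \bar R) (W : X * X -> R) (xx : X * X) : \bar R :=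
  (\int[check_kernel C P Q xx]_z (W z)%:E)%E.

(* Main.v *)
Set Warnings "-all".
Require Import Defs.
From HB Require Import structures.
From mathcomp Require Import all_boot all_order all_algebra.
From mathcomp Require Import all_classical all_reals all_analysis.
From mathcomp Require Import lra ring.
Import Order.TTheory GRing.Theory Num.Theory.
Import numFieldNormedType.Exports.
Local Open Scope classical_set_scope.
Local Open Scope ring_scope.

Notation measurable_EFinP := measurable_realfun.measurable_EFinP.

Notation measurable_funD := measurable_realfun.measurable_funD.
Notation measurable_funB := measurable_realfun.measurable_funB.

Section PM.
Variables (d : measure_display) (X : measurableType d) (R : realType)
  (P : R.-pker X ~> X) (x : X).
Definition Pm : set X -> \bar R := P x.
HB.instance Definition _ := Measure.copy Pm (P x).
HB.instance Definition _ := Measure_isProbability.Build _ _ _ Pm (@prob_kernel _ _ _ _ _ P x).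
End PM.

Lemma pmul d (X : measurableType d) (R : realType) (m : probability X R) (c : \bar R) :
  (c * m [set: X] = c)%E.
Proof. by rewrite probability_setT mule1. Qed.

Lemma int_shift1 {d} {X : measurableType d} {R : realType} {m : probability X R}
  {W0 : X -> R} {a : R} : measurable_fun setT W0 -> (forall x, 1 <= W0 x) ->
  (\int[m]_y (W0 y)%:E = a%:E)%E -> (\int[m]_y (W0 y - 1)%:E = (a - 1)%:E)%E.
Proof.
move=> mW W1 Ha.
have H : (\int[m]_y (W0 y)%:E = \int[m]_y (W0 y - 1)%:E + \int[m]_y (cst 1%:E y))%E.
  transitivity (\int[m]_y ((W0 y - 1)%:E + cst 1%:E y))%E.
    by apply: eq_integral => y _; rewrite /= -EFinD subrK.
  rewrite ge0_integralD //.
  all: try by move=> y _; rewrite lee_fin subr_ge0.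
  all: try by apply/measurable_EFinP; apply: measurable_funB.
rewrite integral_cst // in H.
have pm : (1%:E * m [set: X] = 1%:E)%E by rewrite pmul.
rewrite pm Ha in H.
move: H; case: (\int[m]_y (W0 y - 1)%:E)%E => [r||] //=.
by move=> [->]; rewrite addrK.
Qed.

Lemma prod_int d (X : measurableType d) (R : realType) (m1 m2 : probability X R)
  (W0 : X -> R) (a b : R) : measurable_fun setT W0 -> (forall x, 1 <= W0 x) ->
  (\int[m1]_y (W0 y)%:E = a%:E)%E -> (\int[m2]_y (W0 y)%:E = b%:E)%E ->
  (\int[m1 \x m2]_z (W0 z.1 + W0 z.2 - 1)%:E = (a + b - 1)%:E)%E.
Proof.
move=> mW W1 Ha Hb.
have b0 : 0 <= b.
  rewrite -lee_fin -Hb; apply: integral_ge0 => y _; rewrite lee_fin.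
  exact: le_trans (W1 y).
rewrite fubini_tonelli1 //; last 2 first.
- apply/measurable_EFinP; apply: measurable_funB => //; apply: measurable_funD.
  + exact: measurableT_comp.
  + exact: measurableT_comp.
- move=> z; rewrite lee_fin; have := W1 z.1; have := W1 z.2; lra.
rewrite /fubini_F.
transitivity (\int[m1]_x ((W0 x - 1)%:E + (cst b%:E x)))%E.
  apply: eq_integral => x _.
  transitivity (\int[m2]_y ((cst (W0 x - 1)%:E y) + (W0 y)%:E))%E.
    by apply: eq_integral => y _ /=; rewrite -EFinD; congr EFin; lra.
  rewrite ge0_integralD //.
  - by rewrite integral_cst // pmul Hb.
  - by move=> y _; rewrite /= lee_fin subr_ge0.
  - by move=> y _; rewrite lee_fin; exact: le_trans (W1 y).
  - exact/measurable_EFinP.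
rewrite ge0_integralD //.
- by rewrite integral_cst // pmul (int_shift1 mW W1 Ha) -EFinD; congr EFin; lra.
- by move=> y _; rewrite lee_fin subr_ge0.
- by apply/measurable_EFinP; apply: measurable_funB.
Qed.

Lemma decomp d (X : measurableType d) (R : realType) (P Q nu : probability X R)
  (eps : R) (g : X -> R) : 0 < eps -> eps < 1 ->
  (forall A, measurable A -> Q A = (((1 - eps)^-1)%:E * (P A - eps%:E * nu A))%E) ->
  measurable_fun setT g -> (forall x, 0 <= g x) ->
  (\int[P]_x (g x)%:E = (1 - eps)%:E * \int[Q]_x (g x)%:E + eps%:E * \int[nu]_x (g x)%:E)%E.
Proof.
move=> e0 e1 HQ mg g0.
have k1p : 0 <= 1 - eps by lra.
have k2p : 0 <= eps by lra.
rewrite (eq_measure_integral (measure_add (mscale (NngNum k1p) Q) (mscale (NngNum k2p) nu))).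
  rewrite ge0_integral_measure_add //; last 2 first.
    by move=> x _; rewrite lee_fin.
    exact/measurable_EFinP.
  rewrite ge0_integral_mscale //; last 2 first.
    exact/measurable_EFinP.
    by move=> x _; rewrite lee_fin.
  rewrite ge0_integral_mscale //.
    exact/measurable_EFinP.
    by move=> x _; rewrite lee_fin.
move=> A mA _; symmetry; etransitivity; first exact: measure_addE.
transitivity ((1 - eps)%:E * Q A + eps%:E * nu A)%E; first by [].
rewrite (HQ A mA).
have PA : P A \is a fin_num by apply: fin_num_measure.
have nA : nu A \is a fin_num by apply: fin_num_measure.
transitivity (fine (P A))%:E; last exact: fineK PA.
rewrite -(fineK PA) -(fineK nA) -!EFinM -EFinD /=; congr EFin.
field; lra.
Qed.

Lemma phi_mono (R : realType) (phi : R -> R) : class_C phi ->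
  forall u v, 1 <= u -> u <= v -> phi u <= phi v.
Proof.
move=> [ge0 [conc [_ [_ [lim _]]]]] u v u1.
rewrite le_eqVlt => /predU1P [->|uv]; first by [].
rewrite leNgt; apply/negP => lt.
have := (cvgryPge _).1 lim (phi u).
case=> M [Mreal HM].
pose z := Num.max (M + 1) (v + 1).
have zM : M < z by rewrite /z lt_max; apply/orP; left; lra.
have zv : v < z by rewrite /z lt_max; apply/orP; right; lra.
have Hz := HM z zM.
pose t := (z - v) / (z - u).
have zu : 0 < z - u by lra.
have t0 : 0 <= t by apply: divr_ge0; lra.
have t1 : t <= 1 by rewrite /t ler_pdivrMr // mul1r; lra.
have tE : t * u + (1 - t) * z = v.
  rewrite /t; field; lra.
have := conc u z t u1 (ltW (le_lt_trans u1 (lt_trans uv zv))).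
rewrite t0 t1 tE => /(_ isT) H.
have : (1 - t) * (phi z - phi u) >= 0 by apply: mulr_ge0; lra.
lra.
Qed.

Lemma phi_subadd (R : realType) (phi : R -> R) : class_C phi ->
  forall a b, 1 <= a -> 1 <= b -> phi (a + b - 1) <= phi a + phi b.
Proof.
move=> [ge0 [conc _]] a b a1 b1.
have p1 := ge0 1 (lexx 1).
have [s1|s1] := eqVneq (a + b - 1) 1.
  have -> : a = 1 by lra.
  have -> : b = 1 by lra.
  rewrite (_ : 1 + 1 - 1 = 1); [lra|ring].
have sp : 0 < a + b - 1 - 1.
  rewrite lt_neqAle; apply/andP; split; last lra.
  apply/eqP => h; move/eqP: s1; apply; lra.
pose t := (a - 1) / (a + b - 1 - 1).
have t0 : 0 <= t by apply: divr_ge0; lra.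
have t1 : t <= 1 by rewrite /t ler_pdivrMr // mul1r; lra.
have s1' : 1 <= a + b - 1 by lra.
have H1 := conc (a + b - 1) 1 t s1' (lexx 1).
have H2 := conc (a + b - 1) 1 (1 - t) s1' (lexx 1).
rewrite t0 t1 in H1; rewrite (_ : 0 <= 1 - t <= 1) in H2; last by apply/andP; split; lra.
have E1 : t * (a + b - 1) + (1 - t) * 1 = a by rewrite /t; field; lra.
have E2 : (1 - t) * (a + b - 1) + (1 - (1 - t)) * 1 = b by rewrite /t; field; lra.
rewrite E1 in H1; rewrite E2 in H2.
have := H1 isT; have := H2 isT.
lra.
Qed.

Lemma fin_split (R : realType) (c1 c2 p : R) (u v : \bar R) : 0 < c1 -> 0 < c2 ->
  (0 <= u)%E -> (0 <= v)%E -> (c1%:E * u + c2%:E * v = p%:E)%E ->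
  exists a b : R, u = a%:E /\ v = b%:E.
Proof.
move=> c10 c20.
have cy1 : (c1%:E * +oo = +oo)%E by rewrite mulry gtr0_sg // mul1e.
have cy2 : (c2%:E * +oo = +oo)%E by rewrite mulry gtr0_sg // mul1e.
case: u => [u||]; case: v => [v||] => //; rewrite ?cy1 ?cy2.
- by move=> _ _ _; exists u, v.
- by move=> _ _; rewrite addey.
- by move=> _ _; rewrite addye.
- by move=> _ _; rewrite addye.
Qed.
Lemma b0_pos d (X : measurableType d) (R : realType) (Pk : X -> probability X R)
  (C : set X) (W0 : X -> R) (phi0 : R -> R) (b0 : R) (x0 : X) :
  measurable_fun setT W0 -> (forall x, 1 <= W0 x) -> class_C phi0 ->
  (forall x, (\int[Pk x]_y (W0 y)%:E <= (W0 x - phi0 (W0 x) + b0 * \1_C x)%:E)%E) ->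
  0 < b0.
Proof.
move=> mW W1 Cphi Hd.
have mono := @phi_mono R phi0 Cphi.
have p1 : 0 < phi0 1 by case: Cphi => _ [_ [_ []]].
rewrite ltNge; apply/negP => hb.
have ne : range W0 !=set0 by exists (W0 x0), x0.
have lb : has_lbound (range W0) by exists 1 => _ [y _ <-].
have [_ [x _ <-] Hx] := inf_adherent p1 (conj ne lb).
have i1 : 1 <= inf (range W0) by apply: lb_le_inf => // _ [y _ <-].
have H := Hd x.
have : ((inf (range W0))%:E <= \int[Pk x]_y (W0 y)%:E)%E.
  apply: (@le_trans _ _ (\int[Pk x]_y (cst (inf (range W0))%:E y))%E).
    by rewrite integral_cst // pmul.
  apply: ge0_le_integral.
  - by [].
  - by move=> y _; rewrite /= lee_fin; lra.
  - by [].
  - exact/measurable_EFinP.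
  - move=> y _; rewrite /= lee_fin; apply: ge_inf => //; by exists y.
move=> /le_trans /(_ H); rewrite lee_fin.
have := mono 1 (W0 x) (lexx 1) (W1 x).
have : b0 * \1_C x <= 0.
  rewrite indicE; case: (x \in C); rewrite /= ?mulr1 ?mulr0 //.
lra.
Qed.

Lemma key_ineq (R : realType) (p1 p2 a1 a2 f1 f2 fs i2 b0 lam fd : R) :
  p1 <= a1 - f1 -> p2 <= a2 - f2 + b0 * i2 -> 0 <= i2 <= 1 ->
  fs <= f1 + f2 -> 0 <= f2 -> fd <= f1 -> b0 < (1 - lam) * fd ->
  0 < lam -> lam < 1 -> 0 < b0 ->
  p1 + p2 - 1 <= a1 + a2 - 1 - lam * fs.
Proof.
move=> h1 h2 /andP[i0 i1] hs f20 hd hb l0 l1 b00.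
have : lam * fs <= lam * (f1 + f2) by apply: ler_wpM2l; lra.
have : b0 * i2 <= b0 * 1 by apply: ler_wpM2l; lra.
have : (1 - lam) * fd <= (1 - lam) * f1 by apply: ler_wpM2l; lra.
have : 0 <= (1 - lam) * f2 by apply: mulr_ge0; lra.
lra.
Qed.
Theorem theorem3 (d : measure_display) (X : measurableType d) (R : realType)
  (P : R.-pker X ~> X) (C : set X) (eps : R) (nu : probability X R)
  (Q : X -> probability X R)
  (W0 : X -> R) (phi0 : R -> R) (b0 lam : R) :
  measurable C ->
  0 < eps ->
  (forall x A, C x -> measurable A -> (eps%:E * nu A <= P x A)%E) ->
  (* residual kernel Q (only its values on C are relevant) *)
  (eps < 1 -> forall x A, C x -> measurable A ->
     Q x A = (((1 - eps)^-1)%:E * (P x A - eps%:E * nu A))%E) ->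
  (eps = 1 -> forall x A, C x -> measurable A -> Q x A = nu A) ->
  measurable_fun setT W0 ->
  (forall x, 1 <= W0 x) ->
  class_C phi0 ->
  (forall x, (\int[P x]_y (W0 y)%:E <=
              (W0 x - phi0 (W0 x) + b0 * \1_C x)%:E)%E) ->
  let d0 := inf [set W0 x | x in ~` C] in
  (* phi0(d0) > b0, with the convention d0 = +oo (phi0(d0) = +oo) if C = X *)
  ((exists x, ~ C x) -> b0 < phi0 d0) ->
  0 < lam ->
  ((exists x, ~ C x) -> lam < 1 - b0 / phi0 d0) ->
  (~ (exists x, ~ C x) -> lam < 1) ->
  let W := fun xx : X * X => W0 xx.1 + W0 xx.2 - 1 in
  let phi := fun v => lam * phi0 v in
  (forall xx : X * X, ~ (C xx.1 /\ C xx.2) ->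
     (check_kernel_fun C (fun x => P x) (fun x => Q x) W xx <= (W xx - phi (W xx))%:E)%E) /\
  (eps < 1 ->
     (ereal_sup [set check_kernel_fun C (fun x => P x) (fun x => Q x) W xx | xx in [set xx | C xx.1 /\ C xx.2]]
      <= 2%:E * ((1 - eps)^-1)%:E *
         (ereal_sup [set \int[P x]_y (W0 y)%:E | x in C]
          - eps%:E * \int[nu]_y (W0 y)%:E) - 1)%E).
Proof.
move=> mC e0 Hmin HQ1 HQe mW W1 Cphi Hdrift d0 Hb0 lam0 Hlam Hlam1 W phi.
have mono := @phi_mono R phi0 Cphi.
have sub := @phi_subadd R phi0 Cphi.
have phi_ge0 : forall v, 1 <= v -> 0 <= phi0 v by case: Cphi.
have pfin : forall x, exists p : R, (\int[P x]_y (W0 y)%:E = p%:E)%E /\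
    p <= W0 x - phi0 (W0 x) + b0 * \1_C x.
  move=> x; have H := Hdrift x.
  have g0 : (0 <= \int[P x]_y (W0 y)%:E)%E.
    by apply: integral_ge0 => y _; rewrite lee_fin; apply: le_trans (W1 y).
  have fin : (\int[P x]_y (W0 y)%:E)%E \is a fin_num.
    by rewrite ge0_fin_numE // (le_lt_trans H) // ltey.
  exists (fine (\int[P x]_y (W0 y)%:E)%E); split; first by rewrite fineK.
  by rewrite -lee_fin fineK.
split.
- move=> [x1 x2] /= nC.
  rewrite /check_kernel_fun /check_kernel /= asboolF //.
  have [p1 [E1 H1]] := pfin x1; have [p2 [E2 H2]] := pfin x2.
  have E : (\int[(P x1 \x P x2)%E]_z (W z)%:E = (p1 + p2 - 1)%:E)%E :=
    @prod_int _ _ _ (@Pm _ _ _ P x1) (@Pm _ _ _ P x2) W0 p1 p2 mW W1 E1 E2.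
  rewrite E lee_fin /W /phi /=.
  have b00 : 0 < b0 := @b0_pos _ _ _ (@Pm _ _ _ P) C W0 phi0 b0 x1 mW W1 Cphi Hdrift.
  have ex : exists x, ~ C x by case: (asboolP (C x1)) => h; [exists x2 => h2; apply: nC | exists x1].
  have lb : has_lbound [set W0 x | x in ~` C] by exists 1 => _ [y _ <-].
  have ne : [set W0 x | x in ~` C] !=set0 by case: ex => x hx; exists (W0 x), x.
  have d01 : 1 <= d0 by apply: lb_le_inf => // _ [y _ <-].
  have dle : forall x, ~ C x -> d0 <= W0 x by move=> x hx; apply: ge_inf => //; exists x.
  have hb := Hb0 ex; have hl := Hlam ex.
  have pd0 : 0 < phi0 d0 by lra.
  have hb' : b0 < (1 - lam) * phi0 d0.
    have : b0 / phi0 d0 < 1 - lam by lra.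
    by rewrite ltr_pdivrMr // mulrC.
  have l1 : lam < 1.
    have : 0 < b0 / phi0 d0 by apply: divr_gt0.
    lra.
  have ind : forall x, 0 <= (\1_C x : R) <= 1.
    by move=> x; rewrite indicE; case: (x \in C); rewrite /= lexx ler01.
  case: (asboolP (C x1)) => c1.
  + have c2 : ~ C x2 by move=> c2; apply: nC.
    rewrite indicE memNset //= mulr0 addr0 in H2.
    have := @key_ineq R p2 p1 (W0 x2) (W0 x1) (phi0 (W0 x2)) (phi0 (W0 x1))
      (phi0 (W0 x2 + W0 x1 - 1)) (\1_C x1) b0 lam (phi0 d0).
    rewrite (addrC (W0 x2) (W0 x1)) (addrC p2 p1).
    apply => //.
    * rewrite addrC; exact: sub.
    * exact: phi_ge0.
    * exact: mono (dle _ c2).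
  + rewrite indicE memNset //= mulr0 addr0 in H1.
    apply: (@key_ineq R p1 p2 (W0 x1) (W0 x2) (phi0 (W0 x1)) (phi0 (W0 x2))
      (phi0 (W0 x1 + W0 x2 - 1)) (\1_C x2) b0 lam (phi0 d0)) => //.
    * exact: sub.
    * exact: phi_ge0.
    * exact: mono (dle _ c1).
- move=> e1.
  have e1' : 0 < 1 - eps by lra.
  have W0ge0 : forall y, 0 <= W0 y by move=> y; apply: le_trans (W1 y).
  have qfin : forall x, C x -> exists p q n : R,
      [/\ (\int[P x]_y (W0 y)%:E = p%:E)%E, (\int[Q x]_y (W0 y)%:E = q%:E)%E,
          (\int[nu]_y (W0 y)%:E = n%:E)%E & p = (1 - eps) * q + eps * n].
    move=> x Cx.
    have dec := @decomp _ _ _ (@Pm _ _ _ P x) (Q x) nu eps W0 e0 e1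
      (fun A mA => HQ1 e1 x A Cx mA) mW W0ge0.
    have [p [Ep _]] := pfin x.
    have gq : (0 <= \int[Q x]_y (W0 y)%:E)%E.
      by apply: integral_ge0 => y _; rewrite lee_fin.
    have gn : (0 <= \int[nu]_y (W0 y)%:E)%E.
      by apply: integral_ge0 => y _; rewrite lee_fin.
    have dec' : ((1 - eps)%:E * \int[Q x]_y (W0 y)%:E + eps%:E * \int[nu]_y (W0 y)%:E = p%:E)%E.
      by rewrite -Ep; exact: esym dec.
    have [q [n [Eq En]]] := @fin_split R _ _ _ _ _ e1' e0 gq gn dec'.
    exists p, q, n; split => //.
    by move: dec'; rewrite Eq En -!EFinM -EFinD => -[].
  apply: ge_ereal_sup => _ [[x1 x2] /= [C1 C2] <-].
  rewrite /check_kernel_fun /check_kernel /= asboolT //.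
  have [p1 [q1 [n [Ep1 Eq1 En H1]]]] := qfin x1 C1.
  have [p2 [q2 [n' [Ep2 Eq2 En' H2]]]] := qfin x2 C2.
  have nn : n' = n by move: En'; rewrite En => -[].
  subst n'.
  have E : (\int[(Q x1 \x Q x2)%E]_z (W z)%:E = (q1 + q2 - 1)%:E)%E :=
    @prod_int _ _ _ (Q x1) (Q x2) W0 q1 q2 mW W1 Eq1 Eq2.
  rewrite E En.
  have S1 : (p1%:E <= ereal_sup [set \int[P x]_y (W0 y)%:E | x in C])%E.
    by apply: ereal_sup_ubound; exists x1.
  have S2 : (p2%:E <= ereal_sup [set \int[P x]_y (W0 y)%:E | x in C])%E.
    by apply: ereal_sup_ubound; exists x2.
  move: S1 S2; case: (ereal_sup _) => [s||] //= S1 S2; last first.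
    rewrite addye // -EFinM mulry gtr0_sg ?mul1e ?addye ?leey //.
    by apply: mulr_gt0 => //; rewrite invr_gt0.
  rewrite lee_fin in S1; rewrite lee_fin in S2.
  rewrite -EFinD lee_fin.
  set c := (1 - eps)^-1.
  have c0 : 0 < c by rewrite /c invr_gt0.
  have q1E : q1 = c * (p1 - eps * n) by rewrite /c H1; field; lra.
  have q2E : q2 = c * (p2 - eps * n) by rewrite /c H2; field; lra.
  have : c * (p1 - eps * n) <= c * (s - eps * n) by apply: ler_wpM2l; lra.
  have : c * (p2 - eps * n) <= c * (s - eps * n) by apply: ler_wpM2l; lra.
  lra.
Qed.
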